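(* Let $G$ be a finite simple graph with a perfect matching $M$, and let $\mathcal{C}$ be an optimal edge $2$-colouring of $G$. For an edge $e$ write $\mathrm{cl}(e)$ for its colour, and for a vertex $u$ write $\mathrm{mcl}(u)$ for the colour of the unique edge of $M$ incident with $u$. Let $u_0u_1\cdots u_k$ ($k\ge 1$) be a path in $G\setminus M$ such that $\mathrm{mcl}(u_0)=\mathrm{cl}(u_0u_1)$ and $\mathrm{mcl}(u_k)=\mathrm{cl}(u_{k-1}u_k)$. Then there exist indices $0\le i<j\le k$ such that $\mathrm{mcl}(u_i)=\mathrm{mcl}(u_j)$.
   Context: $G\setminus M$ is the spanning subgraph of $G$ with edge set $E(G)\setminus M$. An edge $2$-colouring is an assignment of colours to edges (not necessarily proper) such that at each vertex the incident edges carry at most $2$ distinct colours; it is optimal if it uses the maximum possible number of colours. *)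

(* Defs.v *)
From mathcomp Require Import all_boot.
Set Implicit Arguments. Unset Strict Implicit. Unset Printing Implicit Defensive.

Definition simple_graph (V : finType) (E : {set {set V}}) : Prop :=
  forall e, e \in E -> #|e| = 2.

Definition perfect_matching (V : finType) (E M : {set {set V}}) : Prop :=
  M \subset E /\ forall v : V, #|[set e in M | v \in e]| = 1.

(* An edge colouring is a map c from edges to colours (natural numbers);
   its values on non-edges are irrelevant. *)
Definition colours_at (V : finType) (E : {set {set V}}) (c : {set V} -> nat)
  (v : V) : seq nat := undup (map c [seq e <- enum E | v \in (e : {set V})]).

Definition edge_2colouring (V : finType) (E : {set {set V}})
  (c : {set V} -> nat) : Prop :=
  forall v : V, size (colours_at E c v) <= 2.

Definition ncolours (V : finType) (E : {set {set V}}) (c : {set V} -> nat)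
  : nat := size (undup [seq c e | e <- enum E]).

Definition optimal_2colouring (V : finType) (E : {set {set V}})
  (c : {set V} -> nat) : Prop :=
  edge_2colouring E c /\
  forall c' : {set V} -> nat, edge_2colouring E c' -> ncolours E c' <= ncolours E c.

Definition mcl (V : finType) (M : {set {set V}}) (c : {set V} -> nat) (u : V)
  : nat :=
  match [pick e in M | u \in e] with Some e => c e | None => 0 end.

(* Main.v *)
From Stdlib Require Import Classical.
Require Import Defs.
From mathcomp Require Import all_boot.

Lemma colour_in (V : finType) (E : {set {set V}}) (c : {set V} -> nat) v e :
  e \in E -> v \in e -> c e \in colours_at E c v.
Proof.
move=> eE ve; rewrite /colours_at mem_undup; apply: map_f.
by rewrite mem_filter ve mem_enum.
Qed.

Lemma three (V : finType) (E : {set {set V}}) (c : {set V} -> nat) v a b d :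
  edge_2colouring E c ->
  a \in colours_at E c v -> b \in colours_at E c v -> d \in colours_at E c v ->
  a != b -> a != d -> b = d.
Proof.
move=> H2 ha hb hd ab ad; apply/eqP; apply/negPn/negP => bd.
have : size [:: a; b; d] <= size (colours_at E c v).
  apply: uniq_leq_size.
    by rewrite /= !inE negb_or ab ad bd.
  by move=> x; rewrite !inE => /or3P[] /eqP ->.
by move/leq_trans/(_ (H2 v)).
Qed.

Lemma mcl_in (V : finType) (E M : {set {set V}}) (c : {set V} -> nat) v :
  perfect_matching E M -> mcl M c v \in colours_at E c v.
Proof.
move=> [sME hM]; rewrite /mcl; case: pickP => [e /andP[eM ve]|none].
  by apply: colour_in => //; apply: (subsetP sME).
have : 0 < #|[set e in M | v \in e]| by rewrite hM.
rewrite card_gt0 => /set0Pn [e]; rewrite inE => he.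
by have := none e; rewrite he.
Qed.

Theorem lemma1 (V : finType) (E M : {set {set V}}) (c : {set V} -> nat)
  (k : nat) (u : nat -> V) :
  simple_graph E ->
  perfect_matching E M ->
  optimal_2colouring E c ->
  1 <= k ->
  (* u_0 ... u_k are distinct vertices *)
  (forall i j, i <= k -> j <= k -> u i = u j -> i = j) ->
  (* consecutive vertices are adjacent in G \ M *)
  (forall i, i < k -> [set u i; u i.+1] \in E :\: M) ->
  mcl M c (u 0) = c [set u 0; u 1] ->
  mcl M c (u k) = c [set u k.-1; u k] ->
  exists i j, i < j <= k /\ mcl M c (u i) = mcl M c (u j).
Proof.
move=> _ PM [H2 _] k1 _ Hpath H0 Hk.
apply: NNPP => Hn.
have H : forall i j, i < j <= k -> mcl M c (u i) != mcl M c (u j).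
  move=> i j hij; apply/eqP => e; apply: Hn; by exists i, j.
have ind : forall i, i < k -> exists2 j, j <= i & c [set u i; u i.+1] = mcl M c (u j).
  elim=> [_|i IH hi]; first by exists 0.
  have [j ji ej] := IH (ltnW hi).
  have hE1 : [set u i; u i.+1] \in E by have := Hpath i (ltnW hi); rewrite inE => /andP[].
  have hE2 : [set u i.+1; u i.+2] \in E by have := Hpath i.+1 hi; rewrite inE => /andP[].
  have c1' : c [set u i; u i.+1] \in colours_at E c (u i.+1).
    by apply: colour_in => //; rewrite !inE eqxx orbT.
  have c2 : c [set u i.+1; u i.+2] \in colours_at E c (u i.+1).
    by apply: colour_in => //; rewrite !inE eqxx.
  have cm := @mcl_in _ E M c (u i.+1) PM.
  case: (eqVneq (mcl M c (u i.+1)) (c [set u i.+1; u i.+2])) => [e|ne].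
    by exists i.+1.
  exists j; first by apply: (leq_trans ji).
  rewrite -(@three _ E c _ _ _ _ H2 cm c1' c2) //.
  rewrite ej eq_sym; apply: H; rewrite (leq_ltn_trans ji) //= ltnW //.
have hk : k.-1 < k by rewrite prednK.
have [j jk ej] := ind k.-1 hk.
move: ej; rewrite prednK // -Hk => e.
have := H j k; rewrite e eqxx /= => /(_ _)/negP; apply => //.
by rewrite leqnn andbT (leq_ltn_trans jk) // prednK.
Qed.
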